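(* Let $d\ge 3$ be an integer, $p\in(0,1]$, and $\delta\in(0,1)$ with $\delta dp\ge 2\log^2 d$. Consider any realisation of $Q^d_p$ and the pruning process defined in the context. Let $t\in[2,\tau]\cap\mathbb{N}$. If $v\in A_t$, then there is a set $X$ of at least $\left(\frac{\delta dp}{2t\log d}\right)^{t-1}$ vertices, each at distance exactly $t-1$ from $v$ in $Q^d$, such that for all $x\in X$, $d_{Q^d_p}(x)\notin[(1-\delta_1)dp,(1+\delta_1)dp]$ (indeed $X\subseteq A_1$).
   Context: $Q^d$ is the $d$-dimensional hypercube (vertex set $\{0,1\}^d$, adjacency = Hamming distance one), and $Q^d_p$ is obtained by retaining each edge of $Q^d$ independently with probability $p$. For a graph $F$ and $S\subseteq V(F)$, $F[S]$ is the induced subgraph. Pruning process: let $\tau=\lfloor\log d\rfloor$ (natural log) and $\delta_t=\frac{t\delta}{\lfloor\log d\rfloor}$ for $t\in\mathbb{N}$. Let $H_1=Q^d_p$ and $A_1=\{v\in V(Q^d): d_{H_1}(v)\notin[(1-\delta_1)dp,(1+\delta_1)dp]\}$. For $t=2,\dots,\tau$, let $H_t=Q^d_p\left[V(Q^d)\setminus\bigcup_{i=1}^{t-1}A_i\right]$ and $A_t=\{v\in V(H_t): d_{H_t}(v)<(1-\delta_t)dp\}$. Finally $H=H_\tau$ and $A=\bigcup_{t=1}^\tau A_t$. Distances are in $Q^d$; $N^k(v)$ is the set of vertices at distance exactly $k$ from $v$ in $Q^d$. *)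

(* Defs.v *)
From mathcomp Require Import all_boot all_order all_algebra.
From mathcomp Require Import all_classical all_reals all_analysis.
Set Implicit Arguments. Unset Strict Implicit. Unset Printing Implicit Defensive.
Import Order.TTheory GRing.Theory Num.Theory.
Local Open Scope ring_scope.

Definition cube (d : nat) := {ffun 'I_d -> bool}.

(* Hamming distance = distance in Q^d. *)
Definition hdist (d : nat) (u v : cube d) : nat := #|[set i | u i != v i]|.

(* A realisation of Q^d_p: a spanning subgraph of Q^d, given by a symmetric
   edge relation E all of whose edges are edges of Q^d. *)
Definition subcube (d : nat) (E : rel (cube d)) : Prop :=
  (forall u v, E u v = E v u) /\ (forall u v, E u v -> hdist u v = 1%N).

Definition deg (d : nat) (E : rel (cube d)) (S : {set cube d}) (v : cube d) : nat :=
  #|[set u in S | E v u]|.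

(* tau = floor(log d) (natural log; log d >= 0 for d >= 1). *)
Definition tau {R : realType} (d : nat) : nat := Num.truncn (ln (d%:R : R)).

Definition deltat {R : realType} (d : nat) (delta : R) (t : nat) : R :=
  t%:R * delta / (tau (R:=R) d)%:R.

(* prune n = (A_{n+1}, A_1 :|: ... :|: A_{n+1}). *)
Fixpoint prune {R : realType} (d : nat) (E : rel (cube d)) (p delta : R) (n : nat)
  : {set cube d} * {set cube d} :=
  match n with
  | O =>
      let A1 := [set v | ~~ (((1 - deltat d delta 1) * d%:R * p <= (deg E [set: cube d]%SET v)%:R)
                             && ((deg E [set: cube d]%SET v)%:R <= (1 + deltat d delta 1) * d%:R * p))] in
      (A1, A1)
  | n'.+1 =>
      let U := (prune E p delta n').2 in
      let At := [set v in ~: U |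
                  (deg E (~: U) v)%:R < (1 - deltat d delta n.+1) * d%:R * p] in
      (At, U :|: At)
  end.

(* A_t for t >= 1 (H_t is the induced subgraph on the complement of A_1..A_{t-1}). *)
Definition Aset {R : realType} (d : nat) (E : rel (cube d)) (p delta : R) (t : nat)
  : {set cube d} := (prune E p delta t.-1).1.

(* Main.v *)
Require Import Defs.
From mathcomp Require Import all_boot all_order all_algebra.
From mathcomp Require Import all_classical all_reals all_analysis.
From mathcomp Require Import ring lra zify.
Import Order.TTheory GRing.Theory Num.Theory.
Set Implicit Arguments. Unset Strict Implicit. Unset Printing Implicit Defensive.
Local Open Scope ring_scope.

Definition flip (d : nat) (w : cube d) (i : 'I_d) : cube d :=
  [ffun k => if k == i then ~~ w k else w k].

Lemma hdist1P (d : nat) (w u : cube d) : hdist w u = 1%N ->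
  exists i, [set j | w j != u j] = [set i] /\ u = flip w i.
Proof.
rewrite /hdist => /eqP /cards1P [i Hi]; exists i; split => //.
apply/ffunP => k; rewrite ffunE.
have := Hi; move/setP/(_ k); rewrite !inE => Hk.
case: (k =P i) Hk => [-> Hk|_ /negbFE/eqP //].
by move: Hk; case: (w i); case: (u i).
Qed.

Lemma hdist_refl (d : nat) (w : cube d) : hdist w w = 0%N.
Proof. by apply/eqP; rewrite cards_eq0; apply/eqP/setP => j; rewrite !inE eqxx. Qed.


Lemma deg_split (d : nat) (E : rel (cube d)) (P A : {set cube d}) (w : cube d) :
  A \subset P -> deg E P w = (deg E (P :\: A) w + #|[set u in A | E w u]|)%N.
Proof.
move=> sAP; rewrite /deg -(cardsID A [set u in P | E w u]) addnC; congr (_ + _)%N.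
  by apply: eq_card => u; rewrite !inE andbA.
apply: eq_card => u; rewrite !inE; case uA: (u \in A); rewrite ?andbF ?andbT //=.
by rewrite (fintype.subsetP sAP).
Qed.

Definition Pdom {R : realType} (d : nat) (E : rel (cube d)) (p delta : R) (n : nat) : {set cube d} :=
  if n is m.+1 then ~: (prune E p delta m).2 else [set: cube d].

Lemma neighA {R : realType} (d : nat) (E : rel (cube d)) (p delta : R) (n : nat) (w : cube d) :
  w \in Aset E p delta n.+2 ->
  (deltat d delta n.+2 - deltat d delta n.+1) * d%:R * p <
    (#|[set u in Aset E p delta n.+1 | E w u]|)%:R.
Proof.
rewrite /Aset /= inE => /andP [wU Hlt].
have eqU : ~: (prune E p delta n).2 = Pdom E p delta n :\: Aset E p delta n.+1.
  rewrite /Aset /Pdom; case: n {wU Hlt} => [|m] /=; first by rewrite finset.setDE finset.setTI.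
  by rewrite finset.setCU finset.setDE.
have sAP : Aset E p delta n.+1 \subset Pdom E p delta n.
  rewrite /Aset /Pdom; case: n {wU Hlt eqU} => [|m] /=; first exact: finset.subsetT.
  by apply/fintype.subsetP => x; rewrite inE => /andP [].
have Hge : (1 - deltat d delta n.+1) * d%:R * p <= (deg E (Pdom E p delta n) w)%:R.
  move: wU Hlt; rewrite /Pdom; case: n {eqU sAP} => [|m] /=.
    by rewrite !inE negbK => /andP [].
  rewrite !inE negb_or => /andP [wU wA] _.
  by move: wA; rewrite wU /= -leNgt.
move: Hge; rewrite (deg_split _ _ sAP) -eqU natrD => Hge.
move: Hlt Hge; set a := (deg _ _ _)%:R; set b := (#|_|)%:R.
rewrite -/(Aset E p delta n.+1) => H1 H2.
lra.
Qed.

Definition G {R : realType} (d : nat) (E : rel (cube d)) (p delta : R)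
  (w : cube d) (C : {set 'I_d}) (s : nat) : {set cube d} :=
  [set x in Aset E p delta 1 | (hdist w x == s.-1) && [forall j in C, x j == w j]].

Lemma G_step {R : realType} (d : nat) (E : rel (cube d)) (p delta : R)
  (w u x : cube d) (C : {set 'I_d}) (n : nat) :
  hdist w u = 1%N -> [forall j in C, u j == w j] ->
  x \in G E p delta u (C :|: [set j | w j != u j]) n.+1 ->
  x \in G E p delta w C n.+2 /\ exists2 j, j \in [set j | w j != x j] & u = flip w j.
Proof.
move=> /hdist1P [i [Hd Hu]] HuC; rewrite Hd; subst u; rewrite !inE => /andP [xA /andP [/eqP hx Hf]].
have xi : x i = ~~ w i.
  by move/forall_inP: Hf => /(_ i); rewrite !inE eqxx orbT ffunE eqxx => /(_ isT) /eqP.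
split; last by exists i => //; rewrite inE xi; case: (w i).
rewrite xA /=; apply/andP; split.
  rewrite /hdist.
  have -> : [set j | w j != x j] = i |: [set j | flip w i j != x j].
    apply/setP => j; rewrite !inE ffunE; case: (j =P i) => [->|_] /=.
      by rewrite xi; case: (w i).
    by [].
  rewrite cardsU1 inE ffunE eqxx xi negbK eqxx /=.
  by move: hx; rewrite /hdist /= => ->.
apply/forall_inP => j jC.
move/forall_inP: Hf => /(_ j); rewrite !inE jC /= => /(_ isT) /eqP ->.
by move/forall_inP: HuC => /(_ j jC).
Qed.

Lemma neighC (d : nat) (E : rel (cube d)) (A : {set cube d}) (w : cube d) (C : {set 'I_d}) :
  subcube E ->
  (#|[set u in A | E w u]| <= #|[set u in A | E w u && [forall j in C, u j == w j]]| + #|C|)%N.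
Proof.
move=> [_ HE].
rewrite -(cardsID [set u : cube d | [forall j in C, u j == w j]] [set u in A | E w u]).
apply: leq_add.
  by rewrite leq_eqVlt; apply/orP; left; apply/eqP/eq_card => u; rewrite !inE andbA.
apply: leq_trans (leq_imset_card (flip w) C).
apply/subset_leq_card/fintype.subsetP => u; rewrite !inE => /andP [Hn /andP [_ /HE /hdist1P [i [_ Hu]]]].
subst u; move: Hn; rewrite negb_forall_in => /existsP [j /andP [jC]].
rewrite ffunE; case: (j =P i) jC => [-> iC _|_ _]; last by rewrite eqxx.
by apply/imsetP; exists i.
Qed.

Lemma dcount (d : nat) (I Y : {set cube d}) (F : cube d -> {set cube d}) (m : nat) :
  (forall x, #|[set u in I | x \in F u]| <= (x \in Y) * m)%N ->
  (\sum_(u in I) #|F u| <= m * #|Y|)%N.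
Proof.
move=> H.
have e1 : forall u, #|F u| = (\sum_x (if x \in F u then 1 else 0))%N.
  by move=> u; rewrite -sum1_card big_mkcond.
rewrite (eq_bigr _ (fun u _ => e1 u)) exchange_big /=.
rewrite -sum1_card big_distrr /= [X in (_ <= X)%N]big_mkcond /=.
apply: leq_sum => x _.
have := H x; rewrite -sum1_card big_mkcond /=.
move=> Hx; rewrite muln1.
have H2 : ((x \in Y) * m <= (if x \in Y then m else 0))%N by case: (x \in Y); rewrite ?mul1n.
apply: leq_trans H2; apply: leq_trans Hx; apply: eq_leq.
rewrite big_mkcond; apply: eq_bigr => u _.
by rewrite inE; case: (u \in I).
Qed.

Lemma main_ind {R : realType} (d : nat) (E : rel (cube d)) (p delta : R) (t : nat) (K : R) :
  subcube E -> 0 <= K ->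
  (forall n c : nat, (n.+1 <= t)%N -> (c <= t)%N ->
     n.+1%:R * K <= (deltat d delta n.+2 - deltat d delta n.+1) * d%:R * p - c%:R) ->
  forall n (w : cube d) (C : {set 'I_d}), w \in Aset E p delta n.+1 ->
    (#|C| + n.+1 <= t)%N -> K ^+ n <= (#|G E p delta w C n.+1|)%:R.
Proof.
move=> sE K0 HK; elim=> [|n IH] w C wA Ct.
  rewrite expr0 ler1n card_gt0; apply/set0Pn; exists w.
  by rewrite inE wA hdist_refl eqxx /=; apply/forall_inP.
set I := [set u in Aset E p delta n.+1 | E w u && [forall j in C, u j == w j]].
set Y := G E p delta w C n.+2.
set F := fun u => G E p delta u (C :|: [set j | w j != u j]) n.+1.
have hN := neighA wA.
have hC := neighC (Aset E p delta n.+1) w C sE.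
have hI : n.+1%:R * K <= (#|I|)%:R.
  apply: le_trans (HK n #|C| _ _) _; [lia|lia|].
  have : ((#|[set u in Aset E p delta n.+1 | E w u]|)%:R <= (#|I|)%:R + (#|C|)%:R :> R).
    by rewrite -natrD ler_nat.
  move: hN; set a := (deltat _ _ _ - _) * _ * _; lra.
have hF : forall u, u \in I -> K ^+ n <= (#|F u|)%:R.
  move=> u; rewrite inE => /andP [uA /andP [Ewu _]]; apply: IH => //.
  have h1 : #|[set j | w j != u j]| = 1%N by have [_ HE] := sE; exact: HE.
  have := cardsUI C [set j | w j != u j]; rewrite h1.
  set a := #|C :|: _|; set b := #|C :&: _|; set c := #|C|; lia.
have hD : (\sum_(u in I) #|F u| <= n.+1 * #|Y|)%N.
  apply: dcount => x.
  case xY : (x \in Y); last first.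
    rewrite mul0n leqn0 cards_eq0; apply/eqP/setP => u; rewrite [in RHS]inE.
    rewrite inE; apply/negbTE; apply/negP => /andP [uI xF].
    move: uI; rewrite inE => /andP [_ /andP [Ewu HuC]].
    have [_ HE] := sE.
    by have [] := G_step (HE _ _ Ewu) HuC xF; rewrite xY.
  rewrite mul1n.
  have -> : n.+1 = #|[set j | w j != x j]|.
    by move: xY; rewrite inE => /andP [_ /andP [/eqP hx _]]; rewrite /hdist in hx; rewrite hx.
  apply: leq_trans (leq_imset_card (flip w) _).
  apply/subset_leq_card/fintype.subsetP => u; rewrite inE => /andP [uI xF].
  move: uI; rewrite inE => /andP [_ /andP [Ewu HuC]].
  have [_ HE] := sE.
  have [_ [j jx ->]] := G_step (HE _ _ Ewu) HuC xF.
  by apply/imsetP; exists j.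
have hS : (#|I|)%:R * K ^+ n <= n.+1%:R * (#|Y|)%:R :> R.
  apply: le_trans (_ : (\sum_(u in I) #|F u|)%:R <= _); last by rewrite -natrM ler_nat.
  rewrite natr_sum (_ : (#|I|)%:R * K ^+ n = \sum_(u in I) K ^+ n); last first.
    by rewrite sumr_const mulr_natl.
  by apply: ler_sum => u uI; apply: hF.
have Kn0 : 0 <= K ^+ n by exact: exprn_ge0.
have h3 : n.+1%:R * (K ^+ n.+1) <= n.+1%:R * (#|Y|)%:R :> R.
  apply: le_trans hS; rewrite exprS mulrA.
  by apply: ler_wpM2r.
by move: h3; rewrite ler_pM2l // ltr0n.
Qed.

Lemma deltat_diff {R : realType} (d : nat) (delta : R) (n : nat) :
  deltat d delta n.+2 - deltat d delta n.+1 = delta / (tau (R:=R) d)%:R.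
Proof. by rewrite /deltat -mulrBl -mulrBl [n.+2%:R]mulrSr addrAC subrr add0r mul1r. Qed.

Theorem lemma2p3 (R : realType) (d : nat) (p delta : R) (E : rel (cube d)) (t : nat) (v : cube d) :
  (3 <= d)%N ->
  0 < p -> p <= 1 ->
  0 < delta -> delta < 1 ->
  2 * (ln (d%:R : R)) ^+ 2 <= delta * d%:R * p ->
  subcube E ->
  (2 <= t)%N -> (t <= tau (R:=R) d)%N ->
  v \in Aset E p delta t ->
  exists X : {set cube d},
    [/\ (forall x, x \in X -> hdist v x = t.-1),
        (delta * d%:R * p / (2 * t%:R * ln (d%:R : R))) ^+ t.-1 <= (#|X|)%:R
      & (forall x, x \in X ->
           ~~ (((1 - deltat d delta 1) * d%:R * p <= (deg E [set: cube d]%SET x)%:R)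
               && ((deg E [set: cube d]%SET x)%:R <= (1 + deltat d delta 1) * d%:R * p)))].
Proof.
move=> d3 p0 p1 de0 de1 hln sE t2 tt vA.
set L := ln (d%:R : R).
set D := delta * d%:R * p.
set T := ((tau (R:=R) d)%:R : R).
have L0 : 0 < L by apply: ln_gt0; rewrite ltr1n; lia.
have D0 : 0 < D by rewrite /D !mulr_gt0 // ltr0n; lia.
have TL : T <= L by rewrite /T /tau truncn_le ltW.
have tT : t%:R <= T :> R by rewrite /T ler_nat.
have t0 : (0 : R) < t%:R by rewrite ltr0n; lia.
have T0 : 0 < T by apply: lt_le_trans tT.
set K := D / (2 * t%:R * L).
have K0 : 0 <= K by rewrite /K divr_ge0 // ?(ltW D0) // !mulr_ge0 // ltW.
have tK : t%:R * K = D / (2 * L) by rewrite /K; field; rewrite ?gt_eqF.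
have hLD : L <= D / (2 * L) by rewrite ler_pdivlMr ?mulr_gt0 // mulrCA -expr2.
have hDT : D / L <= D / T.
  by rewrite ler_pM2l // lef_pV2 // posrE.
have hDL : D / L = 2 * (D / (2 * L)) by field; rewrite gt_eqF.
have HK : forall n c : nat, (n.+1 <= t)%N -> (c <= t)%N ->
     n.+1%:R * K <= (deltat d delta n.+2 - deltat d delta n.+1) * d%:R * p - c%:R.
  move=> n c hn hc.
  have e : (deltat d delta n.+2 - deltat d delta n.+1) * d%:R * p = D / T.
    by rewrite deltat_diff /D -/T; field; rewrite gt_eqF.
  rewrite e.
  have h1 : n.+1%:R * K <= t%:R * K by apply: ler_wpM2r => //; rewrite ler_nat.
  have h2 : c%:R <= t%:R :> R by rewrite ler_nat.
  lra.
exists (G E p delta v (finset.set0 : {set 'I_d}) t); split.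
- by move=> x; rewrite inE => /andP [_ /andP [/eqP -> _]].
- have H := main_ind sE K0 HK (n:=t.-1) (w:=v) (C:=(finset.set0 : {set 'I_d})).
  rewrite (prednK (ltnW t2)) in H.
  apply: H => //.
  by rewrite -[X in (_ <= X)%N]add0n leq_add2r leqn0 finset.cards_eq0.
- move=> x; rewrite inE => /andP [xA _]; move: xA.
  by rewrite /Aset /= inE.
Qed.
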